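(* Let $\Omega$ be a set and $G$ a subgroup of $S=\mathrm{Sym}(\Omega)$ which is discrete in the function topology on $S$ and such that each element of $G$ moves only finitely many elements of $\Omega$. Then $G$ is finite.
   Context: $\mathrm{Sym}(\Omega)$ is the group of all permutations of $\Omega$, with the function topology (pointwise convergence, $\Omega$ discrete); discrete means discrete in the subspace topology. *)

(* Defs.v *)
From Stdlib Require Import List.

Definition is_perm {Omega : Type} (f : Omega -> Omega) : Prop :=
  exists g : Omega -> Omega,
    (forall x, g (f x) = x) /\ (forall x, f (g x) = x).

Definition is_subgroup_Sym {Omega : Type} (G : (Omega -> Omega) -> Prop) : Prop :=
  (forall f, G f -> is_perm f) /\
  G (fun x => x) /\
  (forall f g, G f -> G g -> G (fun x => f (g x))) /\
  (forall f, G f -> exists h, G h /\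
       (forall x, h (f x) = x) /\ (forall x, f (h x) = x)).

(* Discreteness of G in the subspace topology induced by the function
   topology: every g in G has a basic open neighbourhood
   {h | h agrees with g on the finite set F} meeting G only in g. *)
Definition discrete_pointwise {Omega : Type} (G : (Omega -> Omega) -> Prop) : Prop :=
  forall g, G g -> exists F : list Omega,
    forall h, G h -> (forall x, In x F -> h x = g x) -> h = g.

Definition finitary {Omega : Type} (g : Omega -> Omega) : Prop :=
  exists F : list Omega, forall x, g x <> x -> In x F.

Definition finite_set {A : Type} (G : A -> Prop) : Prop :=
  exists l : list A, forall a, G a -> In a l.

(* Main.v *)
Require Import Defs.
From Stdlib Require Import List.
From Stdlib Require Import Classical FunctionalExtensionality Lia.

Lemma finite_union {A B : Type} (P : B -> A -> Prop) (l : list B) :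
  (forall b, In b l -> finite_set (P b)) ->
  finite_set (fun a => exists b, In b l /\ P b a).
Proof.
  induction l as [|b l IH]; intros H.
  - exists nil. intros a [b [[] _]].
  - destruct (H b (or_introl eq_refl)) as [l1 H1].
    destruct IH as [l2 H2]. { intros c Hc. apply H. right. exact Hc. }
    exists (l1 ++ l2). intros a [c [[Hc|Hc] Hp]].
    + subst. apply in_or_app. left. auto.
    + apply in_or_app. right. apply H2. eauto.
Qed.

Lemma remove_one {A : Type} (z : A) (L : list A) : In z L ->
  exists L', length L' < length L /\ forall x, In x L -> x = z \/ In x L'.
Proof.
  induction L as [|a L IH]; simpl; intros Hz; [contradiction|].
  destruct Hz as [Hz|Hz].
  - subst. exists L. split; [lia|]. intros x [Hx|Hx]; auto.
  - destruct (IH Hz) as [L' [Hl HL]]. exists (a :: L'). simpl. split; [lia|].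
    intros x [Hx|Hx]; [right; left; auto|]. destruct (HL x Hx); auto.
Qed.

Lemma stab_subgroup {Omega : Type} (G : (Omega -> Omega) -> Prop) (z : Omega) :
  is_subgroup_Sym G -> is_subgroup_Sym (fun h => G h /\ h z = z).
Proof.
  intros [Hp [Hid [Hc Hi]]]. split; [|split; [|split]].
  - intros f [Gf _]. auto.
  - split; auto.
  - intros f g [Gf Hf] [Gg Hg]. split; [apply Hc; auto|]. rewrite Hg. auto.
  - intros f [Gf Hf]. destruct (Hi f Gf) as [h [Gh [H1 H2]]].
    exists h. split; [split|split]; auto. rewrite <- Hf at 1. apply H1.
Qed.

Lemma main_ind (n : nat) : forall (Omega : Type) (G : (Omega -> Omega) -> Prop) (F : list Omega),
  length F <= n ->
  is_subgroup_Sym G ->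
  (forall g, G g -> finitary g) ->
  (forall h, G h -> (forall x, In x F -> h x = x) -> h = (fun x => x)) ->
  finite_set G.
Proof.
  induction n as [|n IH]; intros Omega G F Hlen Hsub Hfin Hdisc.
  - destruct F; simpl in Hlen; [|lia].
    exists ((fun x : Omega => x) :: nil). intros a Ga. left.
    symmetry. apply Hdisc; auto. intros x [].
  - destruct (classic (exists g, G g /\ exists x0, g x0 <> x0)) as [[g [Gg [x0 Hx0]]]|Hno].
    2:{ exists ((fun x : Omega => x) :: nil). intros a Ga. left.
        symmetry. apply functional_extensionality. intros x.
        apply NNPP. intros Hn. apply Hno. eauto. }
    destruct Hsub as [Hp [Hid [Hc Hi]]] eqn:EH.
    destruct (Hfin g Gg) as [S HS].
    assert (Hcl : forall h, G h -> exists zs, In zs (list_prod F S) /\ (G h /\ h (fst zs) = snd zs)).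
    { intros h Gh. apply NNPP. intros Hn.
      destruct (Hi h Gh) as [hi [Ghi [Hi1 Hi2]]].
      assert (Hk : (fun x => hi (g (h x))) = (fun x => x)).
      { apply Hdisc.
        - apply Hc; auto.
        - intros z Hz. destruct (classic (g (h z) = h z)) as [E|E].
          + rewrite E. apply Hi1.
          + exfalso. apply Hn. exists (z, h z). simpl. split; auto.
            apply in_prod; auto. }
      apply Hx0. assert (E := f_equal (fun f => f (hi x0)) Hk). simpl in E.
      rewrite Hi2 in E. rewrite <- (Hi2 (g x0)), E, Hi2. reflexivity. }
    destruct (finite_union (fun zs h => G h /\ h (fst zs) = snd zs) (list_prod F S)) as [l Hl].
    2:{ exists l. intros a Ga. apply Hl. apply Hcl. auto. }
    intros [z s] Hzs. apply in_prod_iff in Hzs. destruct Hzs as [Hz _]. simpl.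
    destruct (remove_one z F Hz) as [F' [HlF' HF']].
    destruct (IH Omega (fun h => G h /\ h z = z) F') as [Lz HLz].
    + lia.
    + apply stab_subgroup; auto.
    + intros f [Gf _]; auto.
    + intros h [Gh Hhz] Hfix. apply Hdisc; auto. intros x Hx.
      destruct (HF' x Hx) as [E|E]; [subst; auto|auto].
    + destruct (classic (exists h0, G h0 /\ h0 z = s)) as [[h0 [Gh0 Hh0]]|Hne].
      2:{ exists nil. intros a [Ga Ha]. apply Hne; eauto. }
      destruct (Hi h0 Gh0) as [h0i [Gh0i [E1 E2]]].
      exists (map (fun k x => h0 (k x)) Lz). intros h [Gh Hh].
      replace h with (fun x => h0 (h0i (h x))).
      2:{ apply functional_extensionality; intros; auto. }
      apply (in_map (fun k x => h0 (k x))). apply HLz. split.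
      * apply Hc; auto.
      * rewrite Hh, <- Hh0. apply E1.
Qed.

Theorem lemma11p1 (Omega : Type) (G : (Omega -> Omega) -> Prop) :
  is_subgroup_Sym G ->
  discrete_pointwise G ->
  (forall g, G g -> finitary g) ->
  finite_set G.
Proof.
  intros Hsub Hd Hfin.
  destruct Hsub as [Hp [Hid [Hc Hi]]] eqn:EH.
  destruct (Hd _ Hid) as [F HF].
  apply (main_ind (length F) Omega G F); auto.
Qed.
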